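(* Let $\mathcal{G}_{\curlywedge}=(G,o,\curlywedge,R_1,\ldots,R_n)$ be a functional Menger $\curlywedge$-algebra of rank $n$ and let $H$ be a nonempty subset of $G$. Then $H$ is a stabilizer of $\mathcal{G}_{\curlywedge}$ if and only if $H$ is stable, $\curlywedge$-stable and $v$-unitary, and $R_iH\subseteq H$ for every $i\in\{1,\ldots,n\}$.
   Context: A functional Menger system of rank $n$ is a nonempty set $G$ with an $(n+1)$-ary operation $o\colon(x_0,x_1,\ldots,x_n)\mapsto x_0[x_1\ldots x_n]$ and unary operations $R_1,\ldots,R_n$ satisfying, for all $i,k\in\{1,\ldots,n\}$ and all elements: (A1) $x[y_1\ldots y_n][z_1\ldots z_n]=x[y_1[z_1\ldots z_n]\ldots y_n[z_1\ldots z_n]]$; (A2) $x[R_1x\ldots R_nx]=x$; (A3) $x[\bar u\,|_iz][R_1y\ldots R_ny]=x[\bar u\,|_iz[R_1y\ldots R_ny]]$; (A4) $R_ix[R_1y\ldots R_ny]=(R_ix)[R_1y\ldots R_ny]$; (A5) $x[R_1y\ldots R_ny][R_1z\ldots R_nz]=x[R_1z\ldots R_nz][R_1y\ldots R_ny]$; (A6) $R_ix[y_1\ldots y_n]=R_i(R_kx)[y_1\ldots y_n]$; (A7) $(R_ix)[y_1\ldots y_n]=y_i[R_1(x[y_1\ldots y_n])\ldots R_n(x[y_1\ldots y_n])]$. Here $x[\bar u\,|_iz]$ denotes $x[u_1\ldots u_{i-1}\,z\,u_{i+1}\ldots u_n]$, and $R_ix[\ldots]$ means $R_i(x[\ldots])$.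 A functional Menger $\curlywedge$-algebra of rank $n$ is an algebra $(G,o,\curlywedge,R_1,\ldots,R_n)$ such that $(G,o,R_1,\ldots,R_n)$ is a functional Menger system of rank $n$, $(G,\curlywedge)$ is a semilattice, and (A8) $x\curlywedge y[R_1z\ldots R_nz]=(x\curlywedge y)[R_1z\ldots R_nz]$; (A9) $x\curlywedge y=x[R_1(x\curlywedge y)\ldots R_n(x\curlywedge y)]$; (A10) $(x\curlywedge y)[z_1\ldots z_n]=x[z_1\ldots z_n]\curlywedge y[z_1\ldots z_n]$. For a set $A$, $\mathcal F(A^n,A)$ is the set of partial maps $A^n\to A$ (viewed as subsets of $A^n\times A$). The Menger composition $f[g_1\ldots g_n]$ is the partial function $\bar a\mapsto f(g_1(\bar a),\ldots,g_n(\bar a))$ (defined exactly when the right side is defined), and $\mathcal R_if$ is the partial function with the same domain as $f$ given by $(a_1,\ldots,a_n)\mapsto a_i$. A representation of $\mathcal G_\curlywedge$ by $n$-place functions on a set $A$ is a map $P\colon G\to\mathcal F(A^n,A)$ with $P(x[y_1\ldots y_n])=P(x)[P(y_1)\ldots P(y_n)]$, $P(R_ix)=\mathcal R_iP(x)$ and $P(x\curlywedge y)=P(x)\cap P(y)$. A nonempty $H\subseteq G$ is a stabilizer of $\mathcal G_\curlywedge$ if there exist such a representation $P$ on some set $A$ and a point $a\in A$ with $H=\{g\in G: P(g)(a,\ldots,a)=a\}$. A nonempty $H\subseteq G$ is stable if $x,y_1,\ldots,y_n\in H$ imply $x[y_1\ldots y_n]\in H$; $\curlywedge$-stable if $x,y\in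 H$ imply $x\curlywedge y\in H$; $v$-unitary if $x[y_1\ldots y_n]\in H$ and $y_1,\ldots,y_n\in H$ imply $x\in H$. *)

(* Defs.v *)
From mathcomp Require Import all_boot.
Set Implicit Arguments. Unset Strict Implicit. Unset Printing Implicit Defensive.

(* Indices i in {1,...,n} are encoded 0-based as i : 'I_n.
   An n-tuple of elements of G is a function 'I_n -> G.
   The Menger operation x[y_1 ... y_n] is  o x y  with y : 'I_n -> G. *)

Section MengerAlgebra.
Variables (n : nat) (G : Type).
Variables (o : G -> ('I_n -> G) -> G) (meet : G -> G -> G) (R : 'I_n -> G -> G).

Definition Rs (y : G) : 'I_n -> G := fun j => R j y.

Definition upd (u : 'I_n -> G) (i : 'I_n) (z : G) : 'I_n -> G :=
  fun j => if j == i then z else u j.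

Definition functional_menger_system : Prop :=
  (forall x (y z : 'I_n -> G), o (o x y) z = o x (fun j => o (y j) z)) /\
  (forall x, o x (Rs x) = x) /\
  (forall x (u : 'I_n -> G) i z y,
              o (o x (upd u i z)) (Rs y) = o x (upd u i (o z (Rs y)))) /\
  (forall i x y, R i (o x (Rs y)) = o (R i x) (Rs y)) /\
  (forall x y z, o (o x (Rs y)) (Rs z) = o (o x (Rs z)) (Rs y)) /\
  (forall i k x (y : 'I_n -> G), R i (o x y) = R i (o (R k x) y)) /\
  (forall i x (y : 'I_n -> G), o (R i x) y = o (y i) (Rs (o x y))).

Definition semilattice : Prop :=
  (forall x y z, meet x (meet y z) = meet (meet x y) z) /\
  (forall x y, meet x y = meet y x) /\
  (forall x, meet x x = x).

Definition functional_menger_meet_algebra : Prop :=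
  functional_menger_system /\ semilattice /\
  (forall x y z, meet x (o y (Rs z)) = o (meet x y) (Rs z)) /\
  (forall x y, meet x y = o x (Rs (meet x y))) /\
  (forall x y (z : 'I_n -> G), o (meet x y) z = meet (o x z) (o y z)).

Definition stable (H : G -> Prop) : Prop :=
  forall x (y : 'I_n -> G), H x -> (forall i, H (y i)) -> H (o x y).
Definition meet_stable (H : G -> Prop) : Prop :=
  forall x y, H x -> H y -> H (meet x y).
Definition v_unitary (H : G -> Prop) : Prop :=
  forall x (y : 'I_n -> G), H (o x y) -> (forall i, H (y i)) -> H x.
Definition R_closed (H : G -> Prop) : Prop :=
  forall i x, H x -> H (R i x).

End MengerAlgebra.

(* Partial n-place functions A^n -> A, as option-valued functions on
   n-tuples 'I_n -> A.  Its graph {(a,b) | f a = Some b} is the subset of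
   A^n x A of the paper. *)
Definition pfun (n : nat) (A : Type) := ('I_n -> A) -> option A.

Definition mcomp n A (f : pfun n A) (g : 'I_n -> pfun n A) : pfun n A :=
  fun a => if [forall i, isSome (g i a)]
           then f (fun i => odflt (a i) (g i a)) else None.

Definition Rproj n A (i : 'I_n) (f : pfun n A) : pfun n A :=
  fun a => if f a is Some _ then Some (a i) else None.

Definition is_intersection n A (h f g : pfun n A) : Prop :=
  forall a b, h a = Some b <-> (f a = Some b /\ g a = Some b).

(* Representation of (G, o, meet, R) by n-place functions on A
   (the equalities of partial maps are stated pointwise, i.e. as equality of
   graphs). *)
Definition representation n (G : Type) (o : G -> ('I_n -> G) -> G)
  (meet : G -> G -> G) (R : 'I_n -> G -> G) (A : Type) (P : G -> pfun n A) : Prop :=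
  (forall x (y : 'I_n -> G) a, P (o x y) a = mcomp (P x) (fun j => P (y j)) a) /\
  (forall i x a, P (R i x) a = Rproj i (P x) a) /\
  (forall x y, is_intersection (P (meet x y)) (P x) (P y)).

Definition stabilizer n (G : Type) (o : G -> ('I_n -> G) -> G)
  (meet : G -> G -> G) (R : 'I_n -> G -> G) (H : G -> Prop) : Prop :=
  exists (A : Type) (P : G -> pfun n A) (a : A),
    representation o meet R P /\
    forall g, H g <-> P g (fun _ => a) = Some a.

(* Main.v *)
Require Import Defs.
From mathcomp Require Import all_boot.
From Stdlib Require Import ClassicalEpsilon FunctionalExtensionality PropExtensionality.

Definition decb (Q : Prop) : bool := if excluded_middle_informative Q then true else false.
Lemma decbP (Q : Prop) : decb Q = true <-> Q.
Proof. rewrite /decb; case: excluded_middle_informative => //. Qed.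

Lemma dir2 (n : nat) (G : Type) (o : G -> ('I_n -> G) -> G)
  (meet : G -> G -> G) (R : 'I_n -> G -> G) (H : G -> Prop) :
  0 < n ->
  functional_menger_meet_algebra o meet R ->
  (exists h, H h) ->
  stable o H -> meet_stable meet H -> v_unitary o H -> R_closed R H ->
  stabilizer o meet R H.
Proof.
move=> n0 [[A1 [A2 [A3 [A4 [A5 [A6 A7]]]]]] [[MA [MC MI]] [A8 [A9 A10]]]] [h0 Hh0].
move=> Hst Hm Hv HR.
pose i0 := Ordinal n0.
pose D := fun u => forall i, H (R i u).
pose E := fun u v => D (meet u v).
have L : forall u v, H (o u (Rs R v)) -> H u /\ D v.
  move=> u v Huv.
  have Dv : D v.
    move=> j; apply: (Hv _ (Rs R (o u (Rs R v)))); last by move=> k; exact: HR.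
    have e := A7 j u (Rs R v).
    change (H (o (Rs R v j) (Rs R (o u (Rs R v))))); rewrite -e -A4; exact: HR.
  split => //; exact: (Hv _ _ Huv).
have F5 : forall z w, D (o z (Rs R w)) <-> D z /\ D w.
  move=> z w; split.
  - move=> Dzw; split.
    + by move=> i; have := Dzw i; rewrite A4 => /L [].
    + by have := Dzw i0; rewrite A4 => /L [].
  - move=> [Dz Dw] i; rewrite A4; exact: Hst.
have F4 : forall x (y : 'I_n -> G) j, D (o x y) -> D (y j).
  move=> x y j Dxy i; have := Dxy i.
  rewrite (A6 i j) A7.
  rewrite A4 => /L []//.
have Esym : forall u v, E u v -> E v u by move=> u v; rewrite /E MC.
have F2 : forall u v, E u v -> D u.
  by move=> u v; rewrite /E A9 => /F5 [].
have Erefl : forall u, D u -> E u u by move=> u; rewrite /E MI.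
have Etrans : forall u v w, E u v -> E v w -> E u w.
  move=> u v w Euv Evw.
  have := proj2 (F5 (meet u v) (meet v w)) (conj Euv Evw).
  rewrite -A8 -A9 (MC v w) MA A9 => /F5 []//.
have F6 : forall u v, E u v -> E (meet u v) u.
  by move=> u v Euv; rewrite /E MC MA MI.
have F5b : forall z w, D (o z (Rs R w)) -> E (o z (Rs R w)) z.
  by move=> z w Dzw; rewrite /E MC A8 MI.
pose cls := fun u => fun x => E x u.
have clsEq : forall u v, E u v -> cls u = cls v.
  move=> u v Euv; apply: functional_extensionality => x.
  apply: propositional_extensionality; rewrite /cls; split => Ex.
  - exact: Etrans Ex Euv.
  - exact: Etrans Ex (Esym _ _ Euv).
have clsE : forall u v, D u -> cls u = cls v -> E u v.
  move=> u v Du e; have : cls u u by exact: Erefl.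
  by rewrite e.
have Cong1 : forall f u i g g', E g g' -> D (o f (upd u i g)) ->
    D (o f (upd u i g')) /\ E (o f (upd u i g)) (o f (upd u i g')).
  move=> f u i g g' Egg' DF.
  pose m := meet g g'.
  have e1 : o g (Rs R m) = m by rewrite /m -A9.
  have e2 : o g' (Rs R m) = m by rewrite /m MC -A9.
  have Dm : D m by [].
  have eF : o (o f (upd u i g)) (Rs R m) = o f (upd u i m) by rewrite A3 e1.
  have eF' : o (o f (upd u i g')) (Rs R m) = o f (upd u i m) by rewrite A3 e2.
  have DFm : D (o (o f (upd u i g)) (Rs R m)) by apply/F5.
  have DF'm : D (o (o f (upd u i g')) (Rs R m)) by rewrite eF' -eF.
  split; first by case/F5: DF'm.
  apply: (Etrans _ (o f (upd u i m))).
    rewrite -eF; apply: Esym; exact: F5b.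
  rewrite -eF'; exact: F5b.
have Cong : forall f g g', (forall i, E (g i) (g' i)) -> D (o f g) ->
    D (o f g') /\ E (o f g) (o f g').
  move=> f g g' Eg DF.
  pose mix := fun k (j : 'I_n) => if j < k then g' j else g j.
  suff : forall k, D (o f (mix k)) /\ E (o f g) (o f (mix k)).
    have -> : g' = mix n by apply: functional_extensionality => j; rewrite /mix ltn_ord.
    by move=> /(_ n).
  elim=> [|k [IHD IHE]].
    have -> : mix 0 = g by apply: functional_extensionality => j; rewrite /mix ltn0.
    split => //; exact: Erefl.
  case: (ltnP k n) => kn.
  - pose i := Ordinal kn.
    have e1 : mix k = upd (mix k) i (g i).
      apply: functional_extensionality => j; rewrite /mix /upd.
      case: eqP => [->|] //=; by rewrite ltnn.
    have e2 : mix k.+1 = upd (mix k) i (g' i).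
      apply: functional_extensionality => j; rewrite /mix /upd.
      case: eqP => [->|ne] /=; first by rewrite ltnS leqnn.
      rewrite ltnS leq_eqVlt; case: eqP => // ejk; exfalso; apply: ne; exact: val_inj.
    have := Cong1 f (mix k) i (g i) (g' i) (Eg i); rewrite -e1 -e2 => /(_ IHD) [D2 E2].
    split => //; exact: Etrans IHE E2.
  - have -> : mix k.+1 = mix k.
      apply: functional_extensionality => j; rewrite /mix.
      have j1 : j < k := leq_trans (ltn_ord j) kn.
      by rewrite j1 ltnS (ltnW j1).
    by split.
pose isCls := fun t : G -> Prop => exists g, D g /\ t = cls g.
pose rep := fun t => epsilon (inhabits h0) (fun g => D g /\ t = cls g).
have repP : forall t, isCls t -> D (rep t) /\ t = cls (rep t).
  by move=> t; exact: epsilon_spec.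
have repE : forall g, D g -> E (rep (cls g)) g.
  move=> g Dg; have [Dr e] := repP (cls g) (ex_intro _ g (conj Dg erefl)).
  exact: (clsE _ _ Dr (esym e)).
pose Q := fun f (t : 'I_n -> G -> Prop) =>
  (forall i, isCls (t i)) /\ D (o f (fun i => rep (t i))).
pose P := fun f t => if decb (Q f t) then Some (cls (o f (fun i => rep (t i)))) else None.
have PS : forall f t, (forall i, isCls (t i)) -> D (o f (fun i => rep (t i))) ->
    P f t = Some (cls (o f (fun i => rep (t i)))).
  by move=> f t C Df; rewrite /P (proj2 (decbP _) (conj C Df)).
have PN : forall f t, ~ Q f t -> P f t = None.
  move=> f t nQ; rewrite /P; case: ifP => // /decbP //.
have PQ : forall f t, isSome (P f t) -> Q f t.
  move=> f t; rewrite /P; case: ifP => // /decbP //.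
clearbody P.
have Dh0 : D h0 by move=> i; exact: HR.
exists (G -> Prop), P, (cls h0); split; [split; [|split]|].
- move=> x y t; rewrite /mcomp /=.
  case: (classic (forall i, isCls (t i))) => [Ct|nCt]; last first.
    rewrite PN; last by case.
    have -> : [forall i, isSome (P (y i) t)] = false.
      apply/negbTE/forallPn; exists i0; rewrite PN //; by case.
    by [].
  pose gb := fun i => rep (t i).
  have Dg : forall i, D (gb i) by move=> i; case: (repP _ (Ct i)).
  case: (classic (D (o x (fun j => o (y j) gb)))) => [Dx|nDx].
  + have DY : forall j, D (o (y j) gb) by move=> j; exact: (F4 x (fun j => o (y j) gb) j Dx).
    rewrite PS //; last by rewrite A1.
    have -> : [forall i, isSome (P (y i) t)] = true.
      by apply/forallP => j; rewrite PS.
    have -> : (fun i => odflt (t i) (P (y i) t)) = (fun i => cls (o (y i) gb)).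
      by apply: functional_extensionality => j; rewrite PS.
    have Cs : forall i, isCls (cls (o (y i) gb)) by move=> i; exists (o (y i) gb).
    have [D2 E2] := Cong x (fun j => o (y j) gb) (fun i => rep (cls (o (y i) gb)))
       (fun i => Esym _ _ (repE _ (DY i))) Dx.
    rewrite PS //; congr Some; rewrite A1; exact: clsEq.
  + rewrite PN; last by move=> [_]; rewrite A1.
    case: ifP => // /forallP allS.
    have DY : forall j, D (o (y j) gb) by move=> j; have [] := PQ _ _ (allS j).
    have -> : (fun i => odflt (t i) (P (y i) t)) = (fun i => cls (o (y i) gb)).
      by apply: functional_extensionality => j; rewrite PS.
    rewrite PN // => -[_ Dx2]; apply: nDx.
    have [] := Cong x (fun i => rep (cls (o (y i) gb))) (fun j => o (y j) gb)
       (fun i => repE _ (DY i)) Dx2 => //.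
- move=> i x t; rewrite /Rproj.
  case: (classic (forall i, isCls (t i))) => [Ct|nCt]; last first.
    by rewrite !PN //; case.
  pose gb := fun i => rep (t i).
  have Dg : forall i, D (gb i) by move=> j; case: (repP _ (Ct j)).
  case: (classic (D (o x gb))) => [Dx|nDx].
  + have DR : D (o (R i x) gb) by rewrite A7; apply/F5.
    rewrite (PS x) // PS //; congr Some.
    rewrite (proj2 (repP _ (Ct i))) A7; apply: clsEq; apply: F5b; rewrite -A7 //.
  + rewrite (PN x) ?PN //.
      by move=> [_]; rewrite A7 => /F5 [].
    by case.
- move=> x y t b.
  case: (classic (forall i, isCls (t i))) => [Ct|nCt]; last first.
    have N : forall f, P f t = None by move=> f; apply: PN; case.
    by rewrite !N; split => // -[].
  pose gb := fun i => rep (t i).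
  have Dg : forall i, D (gb i) by move=> j; case: (repP _ (Ct j)).
  split.
  + move=> h; have [_ Euv] : Q (meet x y) t by apply: PQ; rewrite h.
    rewrite A10 in Euv.
    have Du := F2 _ _ Euv; have Dv := F2 _ _ (Esym _ _ Euv).
    move: h; rewrite PS ?A10 // => -[<-].
    rewrite !PS //; split; congr Some; apply: clsEq.
    * exact: Esym (F6 _ _ Euv).
    * rewrite MC; exact: Esym (F6 _ _ (Esym _ _ Euv)).
  + move=> [h1 h2].
    have [_ Du] : Q x t by apply: PQ; rewrite h1.
    have [_ Dv] : Q y t by apply: PQ; rewrite h2.
    move: h1 h2; rewrite (PS x) // (PS y) // => h1 h2.
    have e1 : cls (o x gb) = b by case: h1.
    have e2 : cls (o y gb) = b by case: h2.
    have Euv : E (o x gb) (o y gb) by apply: clsE => //; rewrite e1 e2.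
    rewrite PS //; last by rewrite A10.
    rewrite -e1 A10; congr Some; apply: clsEq; exact: F6.
- move=> g.
  have Ct : isCls (cls h0) by exists h0.
  have [Dr er] := repP _ Ct.
  have Er : E (rep (cls h0)) h0 by exact: repE.
  split.
  + move=> Hg.
    have Hw : H (o g (fun _ => h0)) by apply: Hst.
    have Dw : D (o g (fun _ => h0)) by move=> i; exact: HR.
    have [D2 E2] := Cong g (fun _ => h0) (fun _ => rep (cls h0)) (fun _ => Esym _ _ Er) Dw.
    rewrite PS //; congr Some; apply: clsEq.
    apply: (Etrans _ _ _ (Esym _ _ E2)).
    by move=> i; apply: HR; apply: Hm.
  + move=> h; have [_ D1] : Q g (fun _ => cls h0) by apply: PQ; rewrite h.
    move: h; rewrite PS // => -[e].
    have E1 := clsE _ _ D1 e.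
    have [Dw E2] := Cong g (fun _ => rep (cls h0)) (fun _ => h0) (fun _ => Er) D1.
    have Em : E (o g (fun _ => h0)) h0 := Etrans _ _ _ (Esym _ _ E2) E1.
    have Hmm : H (meet (o g (fun _ => h0)) h0).
      rewrite MC A9; apply: Hst => // i; rewrite /Rs MC; exact: Em.
    have Hw : H (o g (fun _ => h0)).
      by move: Hmm; rewrite A9 => /L [].
    exact: (Hv _ _ Hw).
Qed.


Theorem theorem5 (n : nat) (G : Type) (o : G -> ('I_n -> G) -> G)
  (meet : G -> G -> G) (R : 'I_n -> G -> G) (H : G -> Prop) :
  0 < n ->
  functional_menger_meet_algebra o meet R ->
  (exists h, H h) ->
  (stabilizer o meet R H <->
   (stable o H /\ meet_stable meet H /\ v_unitary o H /\ R_closed R H)).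
Proof.
move=> n0 Halg Hne; split; last first.
  by move=> [Hs [Hm [Hv HR]]]; exact: dir2.
move=> [A [P [a [[Po [PR Pm]] HP]]]].
  have allS : forall y : 'I_n -> G, (forall i, H (y i)) ->
     [forall i, isSome (P (y i) (fun _ => a))].
    by move=> y Hy; apply/forallP => i; rewrite (proj1 (HP _) (Hy i)).
  have cst : forall y : 'I_n -> G, (forall i, H (y i)) ->
     (fun i => odflt a (P (y i) (fun _ => a))) = (fun _ => a).
    by move=> y Hy; apply: functional_extensionality => i; rewrite (proj1 (HP _) (Hy i)).
  split; [|split; [|split]].
  + move=> x y Hx Hy; apply/HP; rewrite Po /mcomp allS // cst //; exact/HP.
  + move=> x y Hx Hy; apply/HP; apply/(Pm x y); split; exact/HP.
  + move=> x y Hxy Hy; apply/HP; move/HP: Hxy; rewrite Po /mcomp allS // cst //.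
  + move=> i x Hx; apply/HP; rewrite PR /Rproj (proj1 (HP _) Hx) //.
Qed.
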